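(* Let $\mathcal{E}$ be a time-translation covariant channel on $S$, let $\rho$ be a state and $\sigma=\mathcal{E}(\rho)$, and let $P_{x'|x}=\langle x'|\mathcal{E}(|x\rangle\langle x|)|x'\rangle$. Then for all $x',y'$, $$|\sigma_{x'y'}|\le\sum_{x,y:\ E_x-E_y=E_{x'}-E_{y'}}\sqrt{P_{x'|x}P_{y'|y}}\;|\rho_{xy}|,$$ where $\rho_{xy}=\langle x|\rho|y\rangle$ and $\sigma_{x'y'}=\langle x'|\sigma|y'\rangle$.
   Context: $S$ is an $n$-dimensional system with non-degenerate Hamiltonian $H_S=\sum_xE_x|x\rangle\langle x|$. $\mathcal{U}_t(X)=e^{-iH_St}Xe^{iH_St}$. A channel (completely positive trace-preserving map) $\mathcal{E}$ is time-translation covariant if $\mathcal{E}\circ\mathcal{U}_t=\mathcal{U}_t\circ\mathcal{E}$ for all $t\in\mathbb{R}$. *)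

(* Defs.v *)
From Stdlib Require Import Reals.
From mathcomp Require Import all_boot.
Set Implicit Arguments. Unset Strict Implicit. Unset Printing Implicit Defensive.

Local Open Scope R_scope.

Definition C : Type := (R * R)%type.
Definition Cre (z : C) : R := fst z.
Definition Cim (z : C) : R := snd z.
Definition RtoC (r : R) : C := (r, 0).
Definition C0 : C := (0, 0).
Definition C1 : C := (1, 0).
Definition Cplus (z w : C) : C := (fst z + fst w, snd z + snd w).
Definition Cmult (z w : C) : C :=
  (fst z * fst w - snd z * snd w, fst z * snd w + snd z * fst w).
Definition Cconj (z : C) : C := (fst z, - snd z).
Definition Cnorm (z : C) : R := sqrt (fst z * fst z + snd z * snd z).
Definition Cexpi (theta : R) : C := (cos theta, sin theta).

Definition Csum (T : finType) (f : T -> C) : C :=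
  List.fold_right Cplus C0 (List.map f (enum T)).
Definition Rsum (T : finType) (f : T -> R) : R :=
  List.fold_right Rplus 0 (List.map f (enum T)).

Definition Op (T : finType) : Type := T -> T -> C.
Definition Mat (n : nat) : Type := Op 'I_n.

Definition trace (T : finType) (X : Op T) : C := Csum (fun i => X i i).

Definition psd (T : finType) (X : Op T) : Prop :=
  forall v : T -> C,
    let z := Csum (fun i => Csum (fun j => Cmult (Cmult (Cconj (v i)) (X i j)) (v j))) in
    Cim z = 0 /\ 0 <= Cre z.

Definition is_state (T : finType) (rho : Op T) : Prop :=
  psd rho /\ trace rho = C1.

Definition is_linear n (E : Mat n -> Mat n) : Prop :=
  forall (X Y : Mat n) (c : C) (i j : 'I_n),
    E (fun a b => Cplus (X a b) (Cmult c (Y a b))) i j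
    = Cplus (E X i j) (Cmult c (E Y i j)).

(* E (x) id_k acting on operators on C^n (x) C^k, indexed by pairs (a, alpha) *)
Definition ampliation n k (E : Mat n -> Mat n) (Z : Op ('I_n * 'I_k)%type)
  : Op ('I_n * 'I_k)%type :=
  fun p q => E (fun a b => Z (a, p.2) (b, q.2)) p.1 q.1.

Definition completely_positive n (E : Mat n -> Mat n) : Prop :=
  forall (k : nat) (Z : Op ('I_n * 'I_k)%type), psd Z -> psd (ampliation E Z).

Definition trace_preserving n (E : Mat n -> Mat n) : Prop :=
  forall X : Mat n, trace (E X) = trace X.

Definition is_channel n (E : Mat n -> Mat n) : Prop :=
  is_linear E /\ completely_positive E /\ trace_preserving E.

Definition nondegenerate n (En : 'I_n -> R) : Prop :=
  forall x y : 'I_n, En x = En y -> x = y.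

(* U_t(X) = e^{-i H t} X e^{i H t}, with H diagonal in the basis |x> *)
Definition Ut n (En : 'I_n -> R) (t : R) (X : Mat n) : Mat n :=
  fun x y => Cmult (Cmult (Cexpi (- (En x * t))) (X x y)) (Cexpi (En y * t)).

Definition time_covariant n (En : 'I_n -> R) (E : Mat n -> Mat n) : Prop :=
  forall (t : R) (X : Mat n) (x y : 'I_n), E (Ut En t X) x y = Ut En t (E X) x y.

Definition ketbra n (x : 'I_n) : Mat n :=
  fun a b => if (a == x) && (b == x) then C1 else C0.

(* P_{x'|x} = <x'| E(|x><x|) |x'>  (a real number, since E(|x><x|) is psd;
   we take its real part) *)
Definition Ptrans n (E : Mat n -> Mat n) (x' x : 'I_n) : R :=
  Cre (E (ketbra x) x' x').

(* Main.v *)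
Require Import Defs.
From Stdlib Require Import Reals Lra Psatz FunctionalExtensionality.
From mathcomp Require Import all_boot.
Import Defs.
Set Implicit Arguments. Unset Strict Implicit. Unset Printing Implicit Defensive.
Local Open Scope R_scope.

Lemma Ceq (z w : C) : fst z = fst w -> snd z = snd w -> z = w.
Proof. destruct z, w; simpl; intros; subst; reflexivity. Qed.

Ltac cring := apply Ceq; unfold Cplus, Cmult, Cconj, C0, C1, Cexpi; simpl; ring.

Definition Lsum (T : Type) (l : seq T) (f : T -> C) : C :=
  List.fold_right Cplus C0 (List.map f l).

Lemma Lsum_plus T (l : seq T) f g :
  Lsum l (fun i => Cplus (f i) (g i)) = Cplus (Lsum l f) (Lsum l g).
Proof. elim: l => [|x l IH] /=; first by cring. rewrite /Lsum /= -/(Lsum l _) IH -/(Lsum l f) -/(Lsum l g). cring. Qed.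

Lemma Lsum_multl T (l : seq T) f c :
  Lsum l (fun i => Cmult c (f i)) = Cmult c (Lsum l f).
Proof. elim: l => [|x l IH] /=; first by cring. rewrite /Lsum /= -/(Lsum l _) IH -/(Lsum l f). cring. Qed.

Lemma Lsum_multr T (l : seq T) f c :
  Lsum l (fun i => Cmult (f i) c) = Cmult (Lsum l f) c.
Proof. elim: l => [|x l IH] /=; first by cring. rewrite /Lsum /= -/(Lsum l _) IH -/(Lsum l f). cring. Qed.

Lemma Lsum_conj T (l : seq T) f :
  Lsum l (fun i => Cconj (f i)) = Cconj (Lsum l f).
Proof. elim: l => [|x l IH] /=; first by cring. rewrite /Lsum /= -/(Lsum l _) IH -/(Lsum l f). cring. Qed.

Lemma Lsum_ext T (l : seq T) f g : (forall i, f i = g i) -> Lsum l f = Lsum l g.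
Proof. move=> H; elim: l => [|x l IH] //=. rewrite /Lsum /= -/(Lsum l _) -/(Lsum l g) IH H //. Qed.

Lemma Lsum_delta0 (T : eqType) (l : seq T) p a : p \notin l ->
  Lsum l (fun i => if i == p then a else C0) = C0.
Proof.
elim: l => [|x l IH] //=. rewrite in_cons negb_or => /andP[H1 H2].
rewrite /Lsum /= -/(Lsum l _) IH //. rewrite eq_sym (negbTE H1). cring.
Qed.

Lemma Lsum_delta (T : eqType) (l : seq T) p a : uniq l -> p \in l ->
  Lsum l (fun i => if i == p then a else C0) = a.
Proof.
elim: l => [|x l IH] //= /andP[Hx Hu]. rewrite in_cons.
rewrite /Lsum /= -/(Lsum l _).
case: eqP => [->|Hne] /= H.
- rewrite eqxx Lsum_delta0 //. cring.
- have : x != p by apply/eqP => E; apply: Hne; rewrite E.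
  move/negbTE => ->. rewrite IH //. cring.
Qed.

Lemma Csum_L (T : finType) (f : T -> C) : Csum f = Lsum (enum T) f.
Proof. by []. Qed.

Lemma Csum_delta (T : finType) (p : T) a :
  Csum (fun i => if i == p then a else C0) = a.
Proof. rewrite Csum_L Lsum_delta //. apply enum_uniq. by rewrite mem_enum. Qed.

Lemma Csum_two (T : finType) (p q : T) (F : T -> C) (Fp Fq : C) :
  (forall j, F j = Cplus (if j == p then Fp else C0) (if j == q then Fq else C0)) ->
  Csum F = Cplus Fp Fq.
Proof.
move=> H. rewrite Csum_L (Lsum_ext _ H) Lsum_plus -!Csum_L !Csum_delta //.
Qed.

Lemma Cnorm_ge0 z : 0 <= Cnorm z.
Proof. apply sqrt_pos. Qed.

Lemma Cnorm_C0 : Cnorm C0 = 0.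
Proof. rewrite /Cnorm /C0 /=. replace (0*0+0*0) with 0 by ring. apply sqrt_0. Qed.

Lemma Cnorm_mult z w : Cnorm (Cmult z w) = Cnorm z * Cnorm w.
Proof.
destruct z as [a b], w as [c d]; rewrite /Cnorm /Cmult /=.
rewrite -sqrt_mult; try nra. f_equal; ring.
Qed.

Lemma Cnorm_triangle z w : Cnorm (Cplus z w) <= Cnorm z + Cnorm w.
Proof.
destruct z as [a b], w as [c d]; rewrite /Cnorm /Cplus /=.
have hs : sqrt (a*a+b*b) * sqrt (a*a+b*b) = a*a+b*b by apply sqrt_sqrt; nra.
have ht : sqrt (c*c+d*d) * sqrt (c*c+d*d) = c*c+d*d by apply sqrt_sqrt; nra.
have hs0 := sqrt_pos (a*a+b*b). have ht0 := sqrt_pos (c*c+d*d).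
set s := sqrt (a*a+b*b) in hs hs0 *. set t := sqrt (c*c+d*d) in ht ht0 *. clearbody s t.
have k : (a*c+b*d)*(a*c+b*d) <= (s*t)*(s*t).
{ replace ((s*t)*(s*t)) with ((s*s)*(t*t)) by ring. rewrite hs ht. have := Rle_0_sqr (a*d-b*c). rewrite /Rsqr. nra. }
have k2 : a*c+b*d <= s*t.
{ have hst := Rmult_le_pos _ _ hs0 ht0. destruct (Rle_or_lt (a*c+b*d) 0) as [h|h]; [lra|]. move: hst k h. move: (a*c+b*d) (s*t) => x y. clear. move=> hs0 k h. nra. }
rewrite -(sqrt_square (s+t)); last lra.
apply sqrt_le_1_alt. nra.
Qed.

Lemma psd_rank1 (T : finType) (w : T -> C) : psd (fun i j => Cmult (w i) (Cconj (w j))).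
Proof.
move=> v /=.
set s := Csum (fun j => Cmult (Cconj (w j)) (v j)).
have -> : Csum (fun i => Csum (fun j => Cmult (Cmult (Cconj (v i)) (Cmult (w i) (Cconj (w j)))) (v j)))
  = Cmult (Cconj s) s.
{ rewrite Csum_L.
  rewrite (Lsum_ext _ (g := fun i => Cmult (Cmult (Cconj (v i)) (w i)) s)); last first.
  { move=> i. rewrite Csum_L /s Csum_L -Lsum_multl. apply Lsum_ext => j. cring. }
  rewrite Lsum_multr /s Csum_L -Lsum_conj. f_equal. apply Lsum_ext => i. cring. }
destruct s as [s1 s2]; rewrite /Cmult /Cconj /=. split; nra.
Qed.

Definition Qf (A B B' D a b : C) : C :=
  Cplus (Cmult (Cconj a) (Cplus (Cmult A a) (Cmult B b)))
        (Cmult (Cconj b) (Cplus (Cmult B' a) (Cmult D b))).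

Lemma psd_2x2 (T : finType) (M : Op T) p q a b : psd M ->
  Cim (Qf (M p p) (M p q) (M q p) (M q q) a b) = 0 /\
  0 <= Cre (Qf (M p p) (M p q) (M q p) (M q q) a b).
Proof.
move=> H.
pose v := fun i => Cplus (if i == p then a else C0) (if i == q then b else C0).
have := H v. cbv zeta.
suff -> : Csum (fun i => Csum (fun j => Cmult (Cmult (Cconj (v i)) (M i j)) (v j)))
   = Qf (M p p) (M p q) (M q p) (M q q) a b by [].
have Hin : forall i, Csum (fun j => Cmult (Cmult (Cconj (v i)) (M i j)) (v j))
   = Cmult (Cconj (v i)) (Cplus (Cmult (M i p) a) (Cmult (M i q) b)).
{ move=> i. rewrite (Csum_two (p:=p) (q:=q) (Fp := Cmult (Cmult (Cconj (v i)) (M i p)) a)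
      (Fq := Cmult (Cmult (Cconj (v i)) (M i q)) b)); first by cring.
  move=> j; rewrite /v /=. case: (eqVneq j p) => [Hp|Hp]; case: (eqVneq j q) => [Hq|Hq]; subst; cring. }
rewrite Csum_L (Lsum_ext _ Hin) -Csum_L.
apply: (Csum_two (p:=p) (q:=q)) => i. rewrite /v /=.
case: (eqVneq i p) => [Hp|Hp]; case: (eqVneq i q) => [Hq|Hq]; subst; cring.
Qed.

Lemma cs_bound (A B B' D : C) :
  (forall a b, Cim (Qf A B B' D a b) = 0 /\ 0 <= Cre (Qf A B B' D a b)) ->
  Cnorm B <= sqrt (Cre A * Cre D).
Proof.
destruct A as [a1 a2], B as [b1 b2], B' as [c1 c2], D as [d1 d2] => H.
have [I1 J1] := H (1,0) (0,0). have [I2 J2] := H (0,0) (1,0).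
have [I3 _] := H (1,0) (1,0). have [I4 _] := H (1,0) (0,1).
rewrite /Qf /Cplus /Cmult /Cconj /= in I1 J1 I2 J2 I3 I4.
have e2 : a2 = 0 by lra. have f2 : d2 = 0 by lra. subst a2 d2.
have g1 : c1 = b1 by lra. have g2 : c2 = - b2 by lra. subst c1 c2.
have [_ J5] := H (d1,0) (-b1,b2). have [_ J6] := H (-b1,-b2) (a1,0).
have [_ J7] := H (1,0) (-b1,b2).
rewrite /Qf /Cplus /Cmult /Cconj /= in J1 J2 J5 J6 J7.
rewrite /Cnorm /=. apply sqrt_le_1_alt.
set r := b1*b1+b2*b2.
have hr : 0 <= r by rewrite /r; nra.
have K5 : 0 <= d1 * (a1*d1 - r) by rewrite /r; nra.
have K6 : 0 <= a1 * (a1*d1 - r) by rewrite /r; nra.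
have K7 : 0 <= a1 - 2*r + d1*r by rewrite /r; nra.
destruct (Rlt_or_le 0 d1). nra. destruct (Rlt_or_le 0 a1). nra. nra.
Qed.

Definition ket2 n (x y : 'I_n) : Mat n :=
  fun a b => if (a == x) && (b == y) then C1 else C0.

Lemma E_zero n (E : Mat n -> Mat n) : is_linear E -> forall i j, E (fun _ _ => C0) i j = C0.
Proof.
move=> H i j. have := H (fun _ _ => C0) (fun _ _ => C0) C1 i j.
have -> : (fun a b : 'I_n => Cplus ((fun _ _ => C0) a b) (Cmult C1 ((fun _ _ => C0) a b)))
   = (fun _ _ => C0).
{ apply functional_extensionality => a; apply functional_extensionality => b. cring. }
move=> h. have h1 := f_equal fst h. have h2 := f_equal snd h.
rewrite /Cplus /Cmult /C1 /= in h1 h2. apply Ceq; simpl; lra.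
Qed.

Lemma E_scale n (E : Mat n -> Mat n) c X i j : is_linear E ->
  E (fun a b => Cmult c (X a b)) i j = Cmult c (E X i j).
Proof.
move=> H. have := H (fun _ _ => C0) X c i j. rewrite E_zero //.
have -> : (fun a b : 'I_n => Cplus ((fun _ _ => C0) a b) (Cmult c (X a b)))
   = (fun a b => Cmult c (X a b)).
{ apply functional_extensionality => a; apply functional_extensionality => b. cring. }
move=> ->. cring.
Qed.

Lemma Cexpi_mult a b : Cmult (Cexpi a) (Cexpi b) = Cexpi (a + b).
Proof. rewrite /Cexpi /Cmult /= cos_plus sin_plus. apply Ceq => /=; ring. Qed.

Lemma covar_zero n (En : 'I_n -> R) (E : Mat n -> Mat n) x y x' y' :
  is_linear E -> time_covariant En E ->
  En x - En y <> En x' - En y' -> E (ket2 x y) x' y' = C0.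
Proof.
move=> HL HC Hne.
set B := E (ket2 x y) x' y'.
have key : forall t, Cmult (Cexpi (- (En x * t) + En y * t)) B
                   = Cmult (Cexpi (- (En x' * t) + En y' * t)) B.
{ move=> t. have := HC t (ket2 x y) x' y'.
  have -> : Ut En t (ket2 x y) =
    (fun a b => Cmult (Cmult (Cexpi (- (En x * t))) (Cexpi (En y * t))) (ket2 x y a b)).
  { apply functional_extensionality => a; apply functional_extensionality => b.
    rewrite /Ut /ket2. case: (eqVneq a x) => [->|Ha]; case: (eqVneq b y) => [->|Hb] /=; cring. }
  rewrite E_scale // -/B /Ut -/B Cexpi_mult => ->.
  rewrite -Cexpi_mult. cring. }
set d := (En y - En x) - (En y' - En x').
have hd : d <> 0 by rewrite /d; lra.
have := key (PI / d).
move/(f_equal (Cmult (Cexpi (- (- (En x' * (PI/d)) + En y' * (PI/d)))))).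
have e1 : forall u w, Cmult u (Cmult w B) = Cmult (Cmult u w) B by move=> u w; cring.
rewrite !e1 !Cexpi_mult.
have -> : - (- (En x' * (PI / d)) + En y' * (PI / d)) + (- (En x * (PI / d)) + En y * (PI / d)) = PI
  by rewrite /d; field.
have -> : - (- (En x' * (PI / d)) + En y' * (PI / d)) + (- (En x' * (PI / d)) + En y' * (PI / d)) = 0
  by ring.
rewrite /Cexpi cos_PI sin_PI cos_0 sin_0.
destruct B as [b1 b2]. rewrite /Cmult /= => h; have h1 := f_equal fst h; have h2 := f_equal snd h; simpl in h1, h2. apply Ceq; simpl; lra.
Qed.

Lemma cp_bound n (E : Mat n -> Mat n) x y x' y' : completely_positive E ->
  Cnorm (E (ket2 x y) x' y') <= sqrt (Ptrans E x' x * Ptrans E y' y).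
Proof.
move=> HCP.
pose w := fun p : ('I_n * 'I_n) => if p.1 == p.2 then C1 else C0.
have := HCP n _ (psd_rank1 w).
set M := ampliation _ _.
have HM : forall p q, M p q = E (ket2 p.2 q.2) p.1 q.1.
{ move=> p q. rewrite /M /ampliation. f_equal.
  apply functional_extensionality => a; apply functional_extensionality => b.
  rewrite /ket2 /w /=. case: (a == p.2); case: (b == q.2); cring. }
move=> HpsdM.
have := cs_bound (fun a b => psd_2x2 (x', x) (y', y) a b HpsdM).
rewrite !HM /=. done.
Qed.

Fixpoint Ml n (rho : Mat n) (l : seq ('I_n * 'I_n)) : Mat n :=
  match l with
  | [::] => fun _ _ => C0
  | p :: l' => fun a b => Cplus (Ml rho l' a b) (Cmult (rho p.1 p.2) (ket2 p.1 p.2 a b))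
  end.

Lemma E_Ml n (E : Mat n -> Mat n) rho l x' y' : is_linear E ->
  E (Ml rho l) x' y' = Lsum l (fun p => Cmult (rho p.1 p.2) (E (ket2 p.1 p.2) x' y')).
Proof.
move=> HL. elim: l => [|p l IH] /=. by rewrite E_zero.
rewrite HL IH /Lsum /=. cring.
Qed.

Lemma Ml_full n (rho : Mat n) l a b : uniq l ->
  Ml rho l a b = if (a, b) \in l then rho a b else C0.
Proof.
elim: l => [|p l IH] //= /andP[Hp Hu]. rewrite IH // in_cons /ket2.
move: Hp. case: (eqVneq (a, b) p) => [<-|Hne] /= Hp.
- rewrite (negbTE Hp) !eqxx /=. cring.
- have -> : ((a == p.1) && (b == p.2)) = false.
  { apply/negbTE; apply/negP => /andP[/eqP e1 /eqP e2]. move/eqP: Hne; apply.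
    rewrite e1 e2. clear. by case: p. }
  case: ((a, b) \in l); cring.
Qed.

Lemma sum_bound (T : Type) (l : seq T) f g :
  (forall p, Cnorm (f p) <= g p) ->
  Cnorm (Lsum l f) <= List.fold_right Rplus 0 (List.map g l).
Proof.
move=> H. elim: l => [|x l IH] /=. rewrite /Lsum /= Cnorm_C0; lra.
rewrite /Lsum /= -/(Lsum l f). eapply Rle_trans. apply Cnorm_triangle.
have := H x. lra.
Qed.

Definition enumT (T : finType) := enum T.

Theorem mainTheorem15 (n : nat) (En : 'I_n -> R) (E : Mat n -> Mat n) (rho : Mat n) :
  nondegenerate En ->
  is_channel E ->
  time_covariant En E ->
  is_state rho ->
  forall x' y' : 'I_n,
    Rle (Cnorm (E rho x' y'))
        (Rsum (fun p : ('I_n * 'I_n)%type =>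
           if Req_EM_T (Rminus (En p.1) (En p.2)) (Rminus (En x') (En y'))
           then Rmult (sqrt (Rmult (Ptrans E x' p.1) (Ptrans E y' p.2)))
                      (Cnorm (rho p.1 p.2))
           else R0)).
Proof.
move=> _ [HL [HCP _]] HC _ x' y'.
have -> : rho = Ml rho (enumT ('I_n * 'I_n)%type).
{ apply functional_extensionality => a; apply functional_extensionality => b.
  by rewrite Ml_full /enumT ?enum_uniq // mem_enum. }
rewrite E_Ml //. rewrite /Rsum -/(enumT _).
apply sum_bound => p.
have Hr : Ml rho (enumT ('I_n * 'I_n)%type) = rho.
{ apply functional_extensionality => a; apply functional_extensionality => b.
  by rewrite Ml_full /enumT ?enum_uniq // mem_enum. }
rewrite Hr Cnorm_mult.
case: Req_EM_T => [e|ne].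
- rewrite Rmult_comm. apply Rmult_le_compat_r; first by apply Cnorm_ge0.
  apply cp_bound => //.
- rewrite (covar_zero (En := En)) //. rewrite Cnorm_C0 /=; lra.
Qed.
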